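(* Let $(l,k,b)$ be a suspension triplet for $(X_A,\sigma_A)$ and $c=l-k$. For $(x,r),(x',r')\in X^{\mathbb R}_{A,b}$ we have $(x,r)\sim_{l,k}(x',r')$ if and only if there exist $n,n'\in\mathbb Z_+$ such that $\sigma_A^n(x)=\sigma_A^{n'}(x')$, $r-c^n(x)=r'-c^{n'}(x')$, and $r-c^m(x)\ge l(\sigma_A^m(x))$ for all $0\le m<n$ and $r'-c^{m'}(x')\ge l(\sigma_A^{m'}(x'))$ for all $0\le m'<n'$.
   Context: Let $N>1$ and $A=[A(i,j)]_{i,j=1}^N$ an irreducible $\{0,1\}$-matrix which is not a permutation matrix. $X_A$ is the compact space of sequences $(x_n)_{n\in\mathbb N}$ with $x_n\in\{1,\dots,N\}$ and $A(x_n,x_{n+1})=1$ for all $n$; $\sigma_A((x_n)_n)=(x_{n+1})_n$. $\mathbb Z_+$, $\mathbb R_+$ denote nonnegative integers/reals. For a function $f$ on $X_A$ and $m\in\mathbb Z_+$, $f^m(x)=\sum_{i=0}^{m-1}f(\sigma_A^i(x))$ (so $f^0=0$). $H^A$ is the quotient of $C(X_A,\mathbb Z)$ by $\{u-u\circ\sigma_A\}$, $H^A_+$ the classes of $\mathbb Z_+$-valued continuous functions; $[f]\in H^A_+$ is an order unit if for every $[u]\in H^A$ some $n\in\mathbb N$ has $n[f]-[u]\in H^A_+$. A suspension triplet is $(l,k,b)$ with $l,k\in C(X_A,\mathbb R_+)$, $b\in C(X_A,\mathbb R)$ such that $c=l-k$ is integer-valued with $[c]$ an order unit, and $l-b$,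 $k-b\circ\sigma_A$ take values in $\mathbb Z_+$. $X^{\mathbb R}_{A,b}=\{(x,r)\in X_A\times\mathbb R: r\ge b(x)\}$ and $\sim_{l,k}$ is the equivalence relation on $X^{\mathbb R}_{A,b}$ generated by $(x,r)\sim_{l,k}(\sigma_A(x),r-c(x))$ whenever $r\ge l(x)$. *)

(* Defs.v *)
From Stdlib Require Import Reals Lra Lia ZArith Relations.
Open Scope R_scope.

(* Sequences over the alphabet {1,...,N} are represented as nat -> nat. *)
Definition seqN := nat -> nat.

Definition shift (n : nat) (x : seqN) : seqN := fun j => x (j + n)%nat.
Definition sigma (x : seqN) : seqN := shift 1 x.

(* A {0,1}-matrix indexed by 1..N is given as A : nat -> nat -> bool. *)
Definition in_alpha (N i : nat) : Prop := (1 <= i <= N)%nat.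

Definition in_XA (N : nat) (A : nat -> nat -> bool) (x : seqN) : Prop :=
  forall n, in_alpha N (x n) /\ A (x n) (x (S n)) = true.

(* irreducible: for all i,j there is m >= 1 with A^m(i,j) > 0, i.e. an A-path
   of length m from i to j *)
Definition irreducible (N : nat) (A : nat -> nat -> bool) : Prop :=
  forall i j, in_alpha N i -> in_alpha N j ->
    exists (m : nat) (p : nat -> nat), (1 <= m)%nat /\ p 0%nat = i /\ p m = j /\
      forall t, (t < m)%nat -> in_alpha N (p t) /\ A (p t) (p (S t)) = true.

Definition is_permutation_matrix (N : nat) (A : nat -> nat -> bool) : Prop :=
  (forall i, in_alpha N i -> exists j, in_alpha N j /\ A i j = true /\
       forall j', in_alpha N j' -> A i j' = true -> j' = j) /\
  (forall j, in_alpha N j -> exists i, in_alpha N i /\ A i j = true /\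
       forall i', in_alpha N i' -> A i' j = true -> i' = i).

(* Continuity on X_A for the product topology: f(y) is close to f(x) as soon as
   y in X_A agrees with x on a long enough initial block. *)
Definition contXA (N : nat) (A : nat -> nat -> bool) (f : seqN -> R) : Prop :=
  forall x, in_XA N A x -> forall eps, eps > 0 -> exists K : nat,
    forall y, in_XA N A y -> (forall j, (j < K)%nat -> y j = x j) ->
      Rabs (f y - f x) < eps.

Definition int_valued (N : nat) (A : nat -> nat -> bool) (f : seqN -> R) : Prop :=
  forall x, in_XA N A x -> exists z : Z, f x = IZR z.

Definition nonneg_int_valued (N : nat) (A : nat -> nat -> bool) (f : seqN -> R) : Prop :=
  forall x, in_XA N A x -> exists z : nat, f x = INR z.

Definition CZ (N : nat) A (f : seqN -> R) : Prop := contXA N A f /\ int_valued N A f.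

(* [f] in H^A_+ : f is cohomologous (mod u - u o sigma, u in C(X_A,Z))
   to a continuous Z_+-valued function *)
Definition in_HA_plus (N : nat) A (f : seqN -> R) : Prop :=
  exists g u : seqN -> R, contXA N A g /\ nonneg_int_valued N A g /\ CZ N A u /\
    forall x, in_XA N A x -> f x = g x + (u x - u (sigma x)).

Definition order_unit (N : nat) A (f : seqN -> R) : Prop :=
  forall u, CZ N A u -> exists n : nat, (1 <= n)%nat /\
    in_HA_plus N A (fun x => INR n * f x - u x).

Definition suspension_triplet (N : nat) A (l k b : seqN -> R) : Prop :=
  contXA N A l /\ contXA N A k /\ contXA N A b /\
  (forall x, in_XA N A x -> 0 <= l x /\ 0 <= k x) /\
  CZ N A (fun x => l x - k x) /\ order_unit N A (fun x => l x - k x) /\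
  nonneg_int_valued N A (fun x => l x - b x) /\
  nonneg_int_valued N A (fun x => k x - b (sigma x)).

(* Birkhoff sum f^m(x) = sum_{i<m} f(sigma^i x), f^0 = 0 *)
Fixpoint bsum (f : seqN -> R) (m : nat) (x : seqN) : R :=
  match m with
  | O => 0
  | S m' => bsum f m' x + f (shift m' x)
  end.

Definition in_XRb (N : nat) A (b : seqN -> R) (p : seqN * R) : Prop :=
  in_XA N A (fst p) /\ snd p >= b (fst p).

Definition susp_gen (N : nat) A (l k b : seqN -> R) (p q : seqN * R) : Prop :=
  in_XRb N A b p /\ snd p >= l (fst p) /\
  q = (sigma (fst p), snd p - (l (fst p) - k (fst p))).

Definition susp_equiv (N : nat) A (l k b : seqN -> R) : relation (seqN * R) :=
  clos_refl_sym_trans (seqN * R) (susp_gen N A l k b).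

(* Main.v *)
Require Import Defs.
From Stdlib Require Import Reals Relations Lra Lia FunctionalExtensionality.
Open Scope R_scope.

Lemma shift_shift a b x : shift a (shift b x) = shift (b + a) x.
Proof. unfold shift; apply functional_extensionality; intro j; f_equal; lia. Qed.

Lemma shift0 x : shift 0 x = x.
Proof. unfold shift; apply functional_extensionality; intro j; f_equal; lia. Qed.

Lemma bsum_add c n i x : bsum c (n + i) x = bsum c n x + bsum c i (shift n x).
Proof.
  induction i; simpl.
  - rewrite Nat.add_0_r; ring.
  - rewrite Nat.add_succ_r; simpl. rewrite IHi, shift_shift. ring.
Qed.

Definition Rel (c l : seqN -> R) (p q : seqN * R) : Prop :=
  exists n n', shift n (fst p) = shift n' (fst q) /\
    snd p - bsum c n (fst p) = snd q - bsum c n' (fst q) /\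
    (forall m, (m < n)%nat -> snd p - bsum c m (fst p) >= l (shift m (fst p))) /\
    (forall m, (m < n')%nat -> snd q - bsum c m (fst q) >= l (shift m (fst q))).

Lemma Rel_sym c l p q : Rel c l p q -> Rel c l q p.
Proof. intros (n & n' & H1 & H2 & H3 & H4); exists n', n; repeat split; auto. Qed.

Lemma Rel_trans_aux c l p q s n n' m m' :
  shift n (fst p) = shift n' (fst q) ->
  snd p - bsum c n (fst p) = snd q - bsum c n' (fst q) ->
  (forall j, (j < n)%nat -> snd p - bsum c j (fst p) >= l (shift j (fst p))) ->
  shift m (fst q) = shift m' (fst s) ->
  snd q - bsum c m (fst q) = snd s - bsum c m' (fst s) ->
  (forall j, (j < m)%nat -> snd q - bsum c j (fst q) >= l (shift j (fst q))) ->
  (forall j, (j < m')%nat -> snd s - bsum c j (fst s) >= l (shift j (fst s))) ->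
  (n' <= m)%nat -> Rel c l p s.
Proof.
  intros H1 H2 H3 G1 G2 G3 G4 Hle.
  assert (K : forall i, shift (n + i) (fst p) = shift (n' + i) (fst q) /\
      snd p - bsum c (n + i) (fst p) = snd q - bsum c (n' + i) (fst q)).
  { intro i. rewrite <- !shift_shift, H1, !bsum_add, H1. split; [reflexivity|lra]. }
  exists (n + (m - n'))%nat, m'. destruct (K (m - n')%nat) as [K1 K2].
  replace (n' + (m - n'))%nat with m in K1, K2 by lia.
  repeat split.
  - rewrite K1; exact G1.
  - rewrite K2; exact G2.
  - intros j Hj. destruct (Nat.lt_ge_cases j n) as [Hj'|Hj']; [auto|].
    replace j with (n + (j - n))%nat by lia. destruct (K (j - n)%nat) as [L1 L2].
    rewrite L1, L2. apply G3. lia.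
  - exact G4.
Qed.

Lemma Rel_trans c l p q s : Rel c l p q -> Rel c l q s -> Rel c l p s.
Proof.
  intros (n & n' & H1 & H2 & H3 & H4) (m & m' & G1 & G2 & G3 & G4).
  destruct (Nat.le_gt_cases n' m).
  - eapply Rel_trans_aux; eauto.
  - apply Rel_sym. eapply (Rel_trans_aux c l s q p m' m n' n); eauto; lia.
Qed.

Lemma in_XA_shift N A x m : in_XA N A x -> in_XA N A (shift m x).
Proof.
  intros H j. unfold shift. replace (S j + m)%nat with (S (j + m)) by lia. apply H.
Qed.

Theorem lemma2p1 (N : nat) (A : nat -> nat -> bool)
  (HN : (1 < N)%nat) (Hirr : irreducible N A) (Hperm : ~ is_permutation_matrix N A)
  (l k b : seqN -> R) (Htrip : suspension_triplet N A l k b)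
  (x x' : seqN) (r r' : R)
  (Hp : in_XRb N A b (x, r)) (Hp' : in_XRb N A b (x', r')) :
  let c := fun y => l y - k y in
  susp_equiv N A l k b (x, r) (x', r') <->
  exists n n' : nat,
    shift n x = shift n' x' /\
    r - bsum c n x = r' - bsum c n' x' /\
    (forall m, (m < n)%nat -> r - bsum c m x >= l (shift m x)) /\
    (forall m', (m' < n')%nat -> r' - bsum c m' x' >= l (shift m' x')).
Proof.
  intro c. destruct Htrip as (_ & _ & _ & _ & _ & _ & Hlb & _).
  split.
  - intro H. change (Rel c l (x, r) (x', r')). clear Hp Hp'.
    induction H as [p q Hg | p | p q _ IH | p q s _ IH1 _ IH2].
    + destruct Hg as (_ & Hl & ->). destruct p as [y t]; simpl in *.
      exists 1%nat, 0%nat; simpl. repeat split.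
      * unfold Defs.sigma. rewrite shift0. reflexivity.
      * unfold c. rewrite shift0. lra.
      * intros m Hm. replace m with 0%nat by lia. simpl. rewrite shift0. lra.
      * intros m Hm; lia.

    + exists 0%nat, 0%nat. repeat split; intros; lia.
    + apply Rel_sym; auto.
    + eapply Rel_trans; eauto.
  - intros (n & n' & H1 & H2 & H3 & H4).
    assert (Chain : forall y t n, in_XRb N A b (y, t) ->
      (forall m, (m < n)%nat -> t - bsum c m y >= l (shift m y)) ->
      susp_equiv N A l k b (y, t) (shift n y, t - bsum c n y)).
    { clear -Hlb. intros y t n Hy Hc. induction n.
      - simpl. rewrite shift0, Rminus_0_r. apply rst_refl.
      - eapply rst_trans. apply IHn. intros; apply Hc; lia.
        apply rst_step. split; [|split].
        + split; simpl. apply in_XA_shift, Hy.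
          destruct (Hlb (shift n y)) as [z Hz]. apply in_XA_shift, Hy.
          pose proof (pos_INR z). specialize (Hc n ltac:(lia)). lra.
        + simpl. apply Hc; lia.
        + simpl. unfold Defs.sigma. rewrite shift_shift, Nat.add_1_r. f_equal. unfold c. ring. }
    eapply rst_trans. apply (Chain x r n); auto.
    apply rst_sym. rewrite H1, H2. apply Chain; auto.
Qed.
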